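(* Let $\mathcal{Q}$ be a nonempty convex delta-matroid on a finite set $E$, with $r=\max\{|S|:S\in\mathcal{Q}\}$ and $s=\min\{|S|:S\in\mathcal{Q}\}$. For $s\le k\le r$ let $\mathcal{Q}_k$ be the set of members of $\mathcal{Q}$ of size $k$. Then each $\mathcal{Q}_k$ is the set of bases of a matroid $\mathcal{M}_k$ on $E$, and there are strong maps $\mathcal{M}_r\to\mathcal{M}_{r-1}\to\cdots\to\mathcal{M}_{s+1}\to\mathcal{M}_s$, every composition of which is also a strong map (i.e. there is a strong map $\mathcal{M}_k\to\mathcal{M}_j$ for all $s\le j<k\le r$).
   Context: $\mathcal{Q}\subseteq 2^E$ is convex if $S\subseteq T\subseteq S'$ with $S,S'\in\mathcal{Q}$ implies $T\in\mathcal{Q}$; it is a delta-matroid if for all $A,B\in\mathcal{Q}$ and $e\in A\triangle B$ there is $f\in A\triangle B$ (possibly $f=e$) with $A\triangle\{e,f\}\in\mathcal{Q}$. A strong map $\mathcal{M}\to\mathcal{M}'$ of matroids is a matroid $\mathcal{N}$ with a distinguished subset $S\subseteq E(\mathcal{N})$ such that $\mathcal{M}\cong\mathcal{N}\setminus S$ (deletion) and $\mathcal{M}'\cong\mathcal{N}/S$ (contraction). *)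

(* Defs.v *)
From mathcomp Require Import all_boot.
Set Implicit Arguments. Unset Strict Implicit. Unset Printing Implicit Defensive.

Definition convex_sys (T : finType) (Q : {set {set T}}) : Prop :=
  forall S U S' : {set T}, S \in Q -> S' \in Q -> S \subset U -> U \subset S' -> U \in Q.

Definition symdiff (T : finType) (A B : {set T}) : {set T} := (A :\: B) :|: (B :\: A).

Definition delta_matroid (T : finType) (Q : {set {set T}}) : Prop :=
  forall (A B : {set T}) (e : T), A \in Q -> B \in Q -> e \in symdiff A B ->
    exists2 f, f \in symdiff A B & symdiff A [set e; f] \in Q.

Definition is_matroid_bases (T : finType) (B : {set {set T}}) : Prop :=
  B != set0 /\
  forall (B1 B2 : {set T}) (x : T), B1 \in B -> B2 \in B -> x \in B1 :\: B2 ->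
    exists2 y, y \in B2 :\: B1 & (B1 :\ x) :|: [set y] \in B.

Definition indep (T : finType) (B : {set {set T}}) (I : {set T}) : bool :=
  [exists b in B, I \subset b].

Definition deletion_bases (T : finType) (B : {set {set T}}) (S : {set T}) : {set {set T}} :=
  [set I | maxset (fun J : {set T} => indep B J && (J \subset ~: S)) I].

Definition contraction_bases (T : finType) (B : {set {set T}}) (S : {set T}) : {set {set T}} :=
  [set b :\: S | b in [set b in B |
     maxset (fun J : {set T} => indep B J && (J \subset S)) (b :&: S)]].

(* Strong map M -> M' between matroids on the same ground set E, given by their
   bases: a matroid N on E + X with distinguished set S = inr-part (so E(N) \ S is
   identified with E via inl), such that M = N \ S and M' = N / S. *)
Definition strong_map (E : finType) (M M' : {set {set E}}) : Prop :=
  exists (X : finType) (N : {set {set (E + X)%type}}),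
    is_matroid_bases N /\
    let S : {set (E + X)%type} := [set inr x | x : X] in
    [set [set inl e | e in b] | b : {set E} in M] = deletion_bases N S /\
    [set [set inl e | e in b] | b : {set E} in M'] = contraction_bases N S.

Definition level (T : finType) (Q : {set {set T}}) (k : nat) : {set {set T}} :=
  [set S in Q | #|S| == k].

(* Main.v *)
Require Import Defs.
From mathcomp Require Import all_boot zify.
Set Implicit Arguments. Unset Strict Implicit. Unset Printing Implicit Defensive.

Ltac rw_hyps := repeat match goal with
 | H : is_true (?a \in ?A) |- context [?a \in ?A] => rewrite H
 | H : is_true (?a \notin ?A) |- context [?a \in ?A] => rewrite (negbTE H)
 | H : is_true (?a != ?b) |- context [?a == ?b] => rewrite (negbTE H)
 | H : is_true (?a != ?b) |- context [?b == ?a] => rewrite [b == a]eq_sym (negbTE H)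
 end.

Ltac bool_finish := rw_hyps; rewrite ?eqxx /=; rw_hyps;
  repeat match goal with |- context [?y \in ?A] => case: (y \in A) end; done.

Ltac set_tac := apply/setP; let x := fresh "x" in intro x; try unfold symdiff; rewrite !inE;
  repeat match goal with |- context [x == ?y] => case: (eqVneq x y) => [->|?] end;
  bool_finish.

Ltac sub_tac := apply/subsetP; let x := fresh "x" in intro x; try unfold symdiff; rewrite !inE;
  repeat match goal with |- context [x == ?y] => case: (eqVneq x y) => [->|?] end;
  bool_finish.

Lemma dm_add (T : finType) (Q : {set {set T}}) : convex_sys Q -> delta_matroid Q ->
  forall A B e, A \in Q -> B \in Q -> e \in B :\: A ->
  A :|: [set e] \in Q \/ exists2 f, f \in A :\: B & (A :|: [set e]) :\ f \in Q.
Proof.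
move=> cv dm A B e HA HB; rewrite inE => /andP [eA eB].
have [f Hf HQ] : exists2 f, f \in symdiff A B & symdiff A [set e; f] \in Q.
  by apply: dm => //; rewrite !inE eA eB.
case: (eqVneq f e) => [fe|fne].
  left; rewrite fe in HQ; suff -> : A :|: [set e] = symdiff A [set e; e] by [].
  set_tac.
move: Hf; rewrite !inE => /orP [/andP [fB fA] | /andP [fA fB]].
  right; exists f; first by rewrite inE fA fB.
  suff -> : (A :|: [set e]) :\ f = symdiff A [set e; f] by [].
  set_tac.
left; apply: (cv A _ (symdiff A [set e; f])) => //.
  sub_tac. sub_tac.
Qed.

Lemma dm_del (T : finType) (Q : {set {set T}}) : convex_sys Q -> delta_matroid Q ->
  forall A B a, A \in Q -> B \in Q -> a \in A :\: B ->
  A :\ a \in Q \/ exists2 f, f \in B :\: A & (A :\ a) :|: [set f] \in Q.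
Proof.
move=> cv dm A B a HA HB; rewrite inE => /andP [aB aA].
have [f Hf HQ] : exists2 f, f \in symdiff A B & symdiff A [set a; f] \in Q.
  by apply: dm => //; rewrite !inE aA aB.
case: (eqVneq f a) => [fe|fne].
  left; rewrite fe in HQ; suff -> : A :\ a = symdiff A [set a; a] by [].
  set_tac.
move: Hf; rewrite !inE => /orP [/andP [fB fA] | /andP [fA fB]].
  left; apply: (cv (symdiff A [set a; f]) _ A) => //.
  sub_tac. sub_tac.
right; exists f; first by rewrite inE fA fB.
suff -> : (A :\ a) :|: [set f] = symdiff A [set a; f] by [].
set_tac.
Qed.

Lemma aug (T : finType) (Q : {set {set T}}) : convex_sys Q -> delta_matroid Q ->
  forall n A B, #|symdiff A B| <= n -> A \in Q -> B \in Q -> #|A| < #|B| ->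
  exists2 e, e \in B :\: A & A :|: [set e] \in Q.
Proof.
move=> cv dm; elim=> [|n IH] A B Hn HA HB Hlt.
  have : symdiff A B = set0 by apply/eqP; rewrite -cards_eq0 -leqn0.
  move/setP => H; have : B \subset A.
    apply/subsetP => x xB; move: (H x); rewrite /symdiff !inE xB /= andbT.
    by case: (x \in A).
  by move/subset_leq_card; rewrite leqNgt Hlt.
have : B :\: A != set0.
  by rewrite setD_eq0; apply/negP => /subset_leq_card; rewrite leqNgt Hlt.
case/set0Pn => e He.
case: (dm_add cv dm HA HB He) => [H|[f Hf HA']]; first by exists e.
move: He Hf; rewrite !inE => /andP [eA eB] /andP [fB fA].
have fne : f != e by apply/eqP => fe; move: fB; rewrite fe eB.
set A' := (A :|: [set e]) :\ f in HA'.
have cA' : #|A'| = #|A|.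
  have := cardsD1 f (A :|: [set e]); rewrite setUC cardsU1 !inE eA fA orbT.
  by rewrite /A' setUC => /eqP; rewrite /= !add1n eqSS => /eqP.
have sd : #|symdiff A' B| < #|symdiff A B|.
  apply: proper_card; apply/properP; split.
    rewrite /A'; sub_tac.
  exists e; first by rewrite /symdiff !inE eA eB.
  rewrite /A' /symdiff !inE; bool_finish.
have sdn : #|symdiff A' B| <= n by rewrite -ltnS (leq_trans sd Hn).
have lt' : #|A'| < #|B| by rewrite cA'.
have [e' He' HC] := IH A' B sdn HA' HB lt'.
move: He'; rewrite /A' !inE negb_and negbK negb_or => /andP [H1 e'B].
have e'f : e' != f by apply/eqP => ef; move: fB; rewrite -ef e'B.
move: H1; rewrite (negbTE e'f) /= => /andP [e'A e'e].
set C := A' :|: [set e'] in HC.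
have [g Hg HD] : exists2 g, g \in symdiff C A & symdiff C [set f; g] \in Q.
  apply: dm => //; rewrite /C /A' /symdiff !inE; bool_finish.
case: (eqVneq g f) => [gf|gf].
  exists e; first by rewrite inE eA eB.
  apply: (cv A _ (symdiff C [set f; g])) => //; first by sub_tac.
  rewrite /C /A' gf; sub_tac.
case: (eqVneq g e) => [ge|ge].
  exists e'; first by rewrite inE e'A e'B.
  suff -> : A :|: [set e'] = symdiff C [set f; g] by [].
  rewrite /C /A' ge; set_tac.
case: (eqVneq g e') => [ge'|ge'].
  exists e; first by rewrite inE eA eB.
  suff -> : A :|: [set e] = symdiff C [set f; g] by [].
  rewrite /C /A' ge'; set_tac.
exfalso; move: Hg; rewrite /C /A' /symdiff !inE; bool_finish.
Qed.

Lemma bigmin_seq_le (I : eqType) (s : seq I) (P : pred I) (F : I -> nat) m x :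
  x \in s -> P x -> \big[minn/m]_(i <- s | P i) F i <= F x.
Proof.
elim: s => [|y s IH] //; rewrite inE big_cons => /orP [/eqP <-|xs] Px.
  by rewrite Px geq_minl.
case: (P y); last exact: IH.
by rewrite geq_min IH // orbT.
Qed.

Lemma bigmin_seq_eq (I : eqType) (s : seq I) (P : pred I) (F : I -> nat) m :
  \big[minn/m]_(i <- s | P i) F i = m \/
  exists2 x, (x \in s) && P x & \big[minn/m]_(i <- s | P i) F i = F x.
Proof.
elim: s => [|y s IH]; first by rewrite big_nil; left.
rewrite big_cons; case Py: (P y).
  case: (leqP (F y) (\big[minn/m]_(i <- s | P i) F i)) => H.
    by right; exists y; rewrite ?inE ?eqxx ?Py.
  case: IH => [->|[x Hx ->]]; first by left.
  by right; exists x => //; move: Hx; rewrite inE => /andP [-> ->]; rewrite orbT.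
case: IH => [->|[x Hx ->]]; first by left.
by right; exists x => //; move: Hx; rewrite inE => /andP [-> ->]; rewrite orbT.
Qed.

Lemma bigmin_fin (I : finType) (A : {set I}) (F : I -> nat) m :
  (forall i, i \in A -> F i <= m) -> A != set0 ->
  (exists2 i, i \in A & \big[minn/m]_(i in A) F i = F i) /\
  (forall i, i \in A -> \big[minn/m]_(i in A) F i <= F i).
Proof.
move=> Hm /set0Pn [i0 Hi0].
have le : forall i, i \in A -> \big[minn/m]_(i in A) F i <= F i.
  by move=> i Hi; apply: bigmin_seq_le => //; rewrite mem_index_enum.
split=> //.
case: (bigmin_seq_eq (index_enum I) (fun i => i \in A) F m) => [H|[x /andP [_ Hx] H]].
  exists i0 => //; apply/eqP; rewrite eqn_leq le //=.
  by move: (H) => /= ->; apply: Hm.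
by exists x.
Qed.

Lemma card_swap (T : finType) (b : {set T}) x y : x \in b -> y \notin b ->
  #|(b :\ x) :|: [set y]| = #|b|.
Proof.
move=> xb yb; rewrite setUC cardsU1 !inE negb_and yb orbT add1n.
by rewrite (cardsD1 x b) xb add1n.
Qed.

Lemma aug' (T : finType) (Q : {set {set T}}) : convex_sys Q -> delta_matroid Q ->
  forall A B, A \in Q -> B \in Q -> #|A| < #|B| ->
  exists2 e, e \in B :\: A & A :|: [set e] \in Q.
Proof. by move=> cv dm A B; apply: (aug cv dm (leqnn _)). Qed.

Lemma level_exch (T : finType) (Q : {set {set T}}) k : convex_sys Q -> delta_matroid Q ->
  forall b1 b2 x, b1 \in level Q k -> b2 \in level Q k -> x \in b1 :\: b2 ->
  exists2 y, y \in b2 :\: b1 & (b1 :\ x) :|: [set y] \in level Q k.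
Proof.
move=> cv dm b1 b2 x Hb1 Hb2 Hx; move: Hb1 Hb2; rewrite !inE => /andP [H1 /eqP c1] /andP [H2 /eqP c2].
have [xb2 xb1] : x \notin b2 /\ x \in b1 by move: (Hx); rewrite !inE => /andP.
case: (dm_del cv dm H1 H2 Hx) => [H|[f Hf HQ]].
  have lt : #|b1 :\ x| < #|b2| by rewrite c2 -c1 (cardsD1 x b1) xb1.
  have [e He HQ] := aug' cv dm H H2 lt.
  move: He; rewrite !inE negb_and negbK => /andP [/orP [/eqP ex|eb1] eb2].
    by move: xb2; rewrite -ex eb2.
  exists e; first by rewrite inE eb1 eb2.
  by rewrite !inE HQ (card_swap xb1 eb1) c1 eqxx.
have fb1 : f \notin b1 by move: Hf; rewrite inE => /andP [].
by exists f => //; rewrite !inE HQ (card_swap xb1 fb1) c1 eqxx.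
Qed.

Lemma extend (T : finType) (Q : {set {set T}}) B : convex_sys Q -> delta_matroid Q ->
  B \in Q -> forall m b, b \in Q -> #|b| + m <= #|B| ->
  exists2 b', b' \in Q & (b \subset b') && (#|b'| == #|b| + m).
Proof.
move=> cv dm HB; elim=> [|m IH] b Hb Hm.
  by exists b => //; rewrite subxx addn0 eqxx.
have Hm' : #|b| + m <= #|B| by apply: leq_trans Hm; rewrite addnS.
have [b' Hb' /andP [sb /eqP cb]] := IH b Hb Hm'.
have lt : #|b'| < #|B| by rewrite cb -addnS.
have [e He HQ] := aug' cv dm Hb' HB lt.
exists (b' :|: [set e]) => //.
rewrite (subset_trans sb (subsetUl _ _)) /= setUC cardsU1 cb addnS.
by move: He; rewrite inE => /andP [-> _].
Qed.

Definition lpart (E X : finType) (B : {set (E + X)%type}) : {set E} := [set e | inl e \in B].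
Definition rpart (E X : finType) (B : {set (E + X)%type}) : {set X} := [set x | inr x \in B].


Lemma inlE (E X : finType) (a b : E) : (inl a == inl b :> (E + X)%type) = (a == b).
Proof. by []. Qed.
Lemma inrE (E X : finType) (a b : X) : (inr a == inr b :> (E + X)%type) = (a == b).
Proof. by []. Qed.
Lemma inlrE (E X : finType) (a : E) (b : X) : (inl a == inr b :> (E + X)%type) = false.
Proof. by []. Qed.
Lemma inrlE (E X : finType) (a : E) (b : X) : (inr b == inl a :> (E + X)%type) = false.
Proof. by []. Qed.

Lemma inl_imset (E X : finType) (A : {set E}) (e : E) :
  (inl e \in ([set inl e' | e' in A] : {set (E + X)%type})) = (e \in A).
Proof. by rewrite mem_imset //; exact: inl_inj. Qed.
Lemma inr_imset (E X : finType) (A : {set X}) (x : X) :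
  (inr x \in ([set inr e' | e' in A] : {set (E + X)%type})) = (x \in A).
Proof. by rewrite mem_imset //; exact: inr_inj. Qed.
Lemma inl_imsetr (E X : finType) (A : {set X}) (e : E) :
  (inl e \in ([set inr e' | e' in A] : {set (E + X)%type})) = false.
Proof. by apply/imsetP => [[x _]]. Qed.
Lemma inr_imsetl (E X : finType) (A : {set E}) (x : X) :
  (inr x \in ([set inl e' | e' in A] : {set (E + X)%type})) = false.
Proof. by apply/imsetP => [[e _]]. Qed.

Definition sumE := (inlE, inrE, inlrE, inrlE, inl_imset, inr_imset, inl_imsetr, inr_imsetl).

Lemma split_set (E X : finType) (B : {set (E + X)%type}) :
  B = [set inl e | e in lpart B] :|: [set inr x | x in rpart B].
Proof.
by apply/setP => z; rewrite inE; case: z => [e|x]; rewrite !sumE !inE ?orbF.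
Qed.

Lemma card_split (E X : finType) (B : {set (E + X)%type}) :
  #|B| = #|lpart B| + #|rpart B|.
Proof.
rewrite {1}(split_set B) cardsU.
have -> : [set inl e | e in lpart B] :&: [set inr x | x in rpart B] = set0.
  by apply/setP => z; rewrite !inE; case: z => [e|x]; rewrite !sumE ?andbF.
by rewrite cards0 subn0 !card_imset //; [exact: inr_inj | exact: inl_inj].
Qed.

Definition Nb (E X : finType) (Q : {set {set E}}) (j k : nat) : {set {set (E + X)%type}} :=
  [set B : {set (E + X)%type} | (#|B| == k) && (lpart B \in Q) && (j <= #|lpart B|)].

Lemma inNb (E X : finType) (Q : {set {set E}}) j k (B : {set (E + X)%type}) :
  (B \in Nb X Q j k) = [&& #|B| == k, lpart B \in Q & j <= #|lpart B|].
Proof. by rewrite inE andbA. Qed.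

Lemma lpart_ll (E X : finType) (B : {set (E + X)%type}) a e :
  lpart ((B :\ inl a) :|: [set inl e]) = (lpart B :\ a) :|: [set e].
Proof. by apply/setP => t; rewrite !inE !sumE orbC. Qed.
Lemma lpart_rr (E X : finType) (B : {set (E + X)%type}) x w :
  lpart ((B :\ inr x) :|: [set inr w]) = lpart B.
Proof. by apply/setP => t; rewrite !inE !sumE orbF. Qed.
Lemma lpart_rl (E X : finType) (B : {set (E + X)%type}) x e :
  lpart ((B :\ inr x) :|: [set inl e]) = lpart B :|: [set e].
Proof. by apply/setP => t; rewrite !inE !sumE orbC. Qed.
Lemma lpart_lr (E X : finType) (B : {set (E + X)%type}) a w :
  lpart ((B :\ inl a) :|: [set inr w]) = lpart B :\ a.
Proof. by apply/setP => t; rewrite !inE !sumE orbF. Qed.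

Lemma Nb_exch (E X : finType) (Q : {set {set E}}) j k :
  convex_sys Q -> delta_matroid Q -> #|X| = k - j -> j <= k ->
  forall B1 B2 z, B1 \in Nb X Q j k -> B2 \in Nb X Q j k -> z \in B1 :\: B2 ->
  exists2 y, y \in B2 :\: B1 & (B1 :\ z) :|: [set y] \in Nb X Q j k.
Proof.
move=> cv dm cX jk B1 B2 z H1 H2 Hz.
move: (H1) (H2); rewrite !inNb => /and3P [/eqP c1 L1 j1] /and3P [/eqP c2 L2 j2].
have cs1 := card_split B1; have cs2 := card_split B2.
have rX1 : #|rpart B1| <= #|X| := max_card _.
move: (Hz); rewrite inE => /andP [zB2 zB1].
have cswap : forall y, y \notin B1 -> #|(B1 :\ z) :|: [set y]| = k.
  by move=> y yB; rewrite card_swap.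
have rlt : forall w, w \in rpart B2 -> w \notin rpart B1 -> #|rpart B1| < #|X|.
  move=> w _ wB1; rewrite -cardsT; apply: proper_card; rewrite properT.
  by apply/eqP => HE; move: wB1; rewrite HE inE.
case: z Hz cswap zB1 zB2 => [a|x] Hz cswap zB1 zB2.
- have aL : a \in lpart B1 by rewrite inE.
  have aL2 : a \notin lpart B2 by rewrite inE.
  have Ha : a \in lpart B1 :\: lpart B2 by rewrite inE aL aL2.
  have cD := cardsD1 a (lpart B1); rewrite aL in cD.
  case: (dm_del cv dm L1 L2 Ha) => [HL|[f Hf HQ]].
  + case: (boolP (rpart B2 \subset rpart B1)) => [sub|/subsetPn [w wB2 wB1]].
    * have le : #|rpart B2| <= #|rpart B1| := subset_leq_card sub.
      have lt : #|lpart B1 :\ a| < #|lpart B2| by clear -c1 c2 cs1 cs2 le cD; lia.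
      have [e He HQ] := aug' cv dm HL L2 lt.
      move: He; rewrite !inE negb_and negbK => /andP [/orP [/eqP ea|eL1] eL2].
        by move: aL2; rewrite -ea inE eL2.
      exists (inl e); first by rewrite !inE eL1 eL2.
      have eL1' : e \notin lpart B1 by rewrite inE.
      rewrite inNb cswap ?inE // lpart_ll HQ eqxx /=.
      by rewrite card_swap.
    * exists (inr w); first by move: wB2 wB1; rewrite !inE => -> ->.
      have := rlt w wB2 wB1 => rl.
      rewrite inNb cswap; last by move: wB1; rewrite inE.
      rewrite lpart_lr HL eqxx /=; clear -c1 cs1 cX rl cD jk; lia.
  + have [fL2 fL1] : f \in lpart B2 /\ f \notin lpart B1.
      by move: Hf; rewrite inE => /andP [].
    exists (inl f); first by move: fL2 fL1; rewrite !inE => -> ->.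
    rewrite inNb cswap; last by move: fL1; rewrite inE.
    by rewrite lpart_ll HQ eqxx card_swap.
- have xR1 : x \in rpart B1 by rewrite inE.
  have xR2 : x \notin rpart B2 by rewrite inE.
  case: (boolP (rpart B2 \subset rpart B1)) => [sub|/subsetPn [w wB2 wB1]].
  + have lt : #|rpart B2| < #|rpart B1|.
      apply: proper_card; apply/properP; split => //; by exists x.
    have lt' : #|lpart B1| < #|lpart B2| by clear -c1 c2 cs1 cs2 lt; lia.
    have [e He HQ] := aug' cv dm L1 L2 lt'.
    have [eL2 eL1] : e \in lpart B2 /\ e \notin lpart B1.
      by move: He; rewrite inE => /andP [].
    exists (inl e); first by move: eL2 eL1; rewrite !inE => -> ->.
    rewrite inNb cswap; last by move: eL1; rewrite inE.
    rewrite lpart_rl HQ eqxx /= setUC cardsU1 eL1; clear -j1; lia.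
  + exists (inr w); first by move: wB2 wB1; rewrite !inE => -> ->.
    rewrite inNb cswap; last by move: wB1; rewrite inE.
    by rewrite lpart_rr L1 eqxx.
Qed.

Lemma inl_S (E X : finType) (e : E) :
  (inl e \in ([set inr x | x : X] : {set (E + X)%type})) = false.
Proof. by apply/imsetP => [[x _]]. Qed.
Lemma inr_S (E X : finType) (x : X) :
  (inr x \in ([set inr x | x : X] : {set (E + X)%type})) = true.
Proof. by apply/imsetP; exists x. Qed.

Lemma lpart_inl (E X : finType) (b : {set E}) :
  lpart ([set inl e | e in b] : {set (E + X)%type}) = b.
Proof. by apply/setP => e; rewrite inE sumE. Qed.

Lemma card_inl (E X : finType) (b : {set E}) :
  #|([set inl e | e in b] : {set (E + X)%type})| = #|b|.
Proof. by rewrite card_imset //; exact: inl_inj. Qed.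

Lemma noinr (E X : finType) (J : {set (E + X)%type}) :
  J \subset ~: [set inr x | x : X] -> J = [set inl e | e in lpart J].
Proof.
move=> /subsetP sJ; apply/setP => z; case: z => [e|x]; first by rewrite sumE inE.
rewrite sumE; apply/negbTE/negP => /sJ; by rewrite inE inr_S.
Qed.

Lemma lpartS (E X : finType) (J B : {set (E + X)%type}) :
  J \subset B -> lpart J \subset lpart B.
Proof. by move=> /subsetP s; apply/subsetP => e; rewrite !inE => /s. Qed.

Lemma P_inl (E X : finType) (Q : {set {set E}}) j k (b : {set E}) :
  j <= k -> b \in level Q k ->
  indep (Nb X Q j k) [set inl e | e in b] &&
  ([set inl e | e in b] \subset ~: [set inr x | x : X]).
Proof.
move=> jk; rewrite inE => /andP [Hb /eqP cb]; apply/andP; split.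
  apply/existsP; exists [set inl e | e in b]; rewrite subxx andbT.
  by rewrite inNb card_inl lpart_inl Hb cb eqxx jk.
by apply/subsetP => z /imsetP [e _ ->]; rewrite inE inl_S.
Qed.

Lemma Nb_del (E X : finType) (Q : {set {set E}}) j k Bm :
  convex_sys Q -> delta_matroid Q -> j <= k -> Bm \in Q -> k <= #|Bm| ->
  [set [set inl e | e in b] | b : {set E} in level Q k] =
  deletion_bases (Nb X Q j k) [set inr x | x : X].
Proof.
move=> cv dm jk HBm kBm.
apply/setP => I; rewrite /deletion_bases inE.
apply/imsetP/maxsetP.
  case=> b Hb ->; split; first exact: P_inl.
  move=> J /andP [HJ sJ] sub.
  case/existsP: HJ => B /andP [HB JB].
  move: HB; rewrite inNb => /and3P [/eqP cB LB jB].
  move: Hb; rewrite inE => /andP [Hb /eqP cb].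
  have s1 : b \subset lpart J by rewrite -(lpart_inl X b); apply: lpartS.
  have s2 : lpart J \subset lpart B := lpartS JB.
  have cs := card_split B.
  have eb : b = lpart B.
    apply/eqP; rewrite eqEcard (subset_trans s1 s2) /= cb.
    by clear -cs cB; lia.
  have lJ : lpart J = b.
    by apply/eqP; rewrite eqEsubset s1 andbT eb s2.
  by rewrite (noinr sJ) lJ.
case=> [/andP [HI sI] Hmax].
case/existsP: HI => B /andP [HB IB].
move: HB; rewrite inNb => /and3P [/eqP cB LB jB].
have cs := card_split B.
have lek : #|lpart B| + (k - #|lpart B|) <= #|Bm|.
  by clear -cs cB kBm; lia.
have [b Hb /andP [sb /eqP cb]] := extend cv dm HBm LB lek.
have cbk : #|b| = k by rewrite cb; clear -cs cB; lia.
have Hbl : b \in level Q k by rewrite inE Hb cbk eqxx.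
exists b => //; symmetry; apply: Hmax; first exact: P_inl.
rewrite (noinr sI); apply: imsetS.
exact: subset_trans (lpartS IB) sb.
Qed.

Lemma B0_Nb (E X : finType) (Q : {set {set E}}) j k (b : {set E}) :
  #|X| = k - j -> j <= k -> b \in level Q j ->
  [set inl e | e in b] :|: [set inr x | x : X] \in Nb X Q j k.
Proof.
move=> cX jk; rewrite inE => /andP [Hb /eqP cb].
have lp : lpart ([set inl e | e in b] :|: [set inr x | x : X]) = b.
  by apply/setP => e; rewrite !inE sumE inl_S orbF.
have rp : rpart ([set inl e | e in b] :|: [set inr x | x : X]) = setT.
  by apply/setP => x; rewrite !inE inr_S orbT.
rewrite inNb lp Hb cb leqnn andbT card_split lp rp cardsT cX cb.
by apply/eqP; clear -jk; lia.
Qed.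

Lemma Nb_con (E X : finType) (Q : {set {set E}}) j k :
  #|X| = k - j -> j <= k -> level Q j != set0 ->
  [set [set inl e | e in b] | b : {set E} in level Q j] =
  contraction_bases (Nb X Q j k) [set inr x | x : X].
Proof.
move=> cX jk /set0Pn [b0 Hb0].
set S := [set inr x | x : X].
have indS : indep (Nb X Q j k) S.
  by apply/existsP; exists ([set inl e | e in b0] :|: S); rewrite B0_Nb //= subsetUr.
have maxS : maxset (fun J => indep (Nb X Q j k) J && (J \subset S)) S.
  apply/maxsetP; split; first by rewrite indS subxx.
  by move=> J /andP [_ JS] SJ; apply/eqP; rewrite eqEsubset JS SJ.
apply/setP => C; rewrite /contraction_bases; apply/imsetP/imsetP.
  case=> b Hb ->; exists ([set inl e | e in b] :|: S).
    rewrite inE B0_Nb //=.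
    suff -> : ([set inl e | e in b] :|: S) :&: S = S by [].
    by apply/setIidPr; rewrite subsetUr.
  apply/setP => z; case: z => [e|x]; rewrite !inE ?sumE /S ?inl_S ?inr_S //=.
  by rewrite orbF.
case=> B; rewrite inE => /andP [HB /maxsetP [_ Hmax]] ->.
have SB : S \subset B.
  have := Hmax S; rewrite indS subxx => /(_ isT (subsetIr _ _)) ->.
  exact: subsetIl.
have rp : rpart B = setT.
  apply/setP => x; rewrite !inE; apply: (subsetP SB); exact: inr_S.
move: HB; rewrite inNb => /and3P [/eqP cB LB jB].
have cs := card_split B; rewrite rp cardsT cX cB in cs.
exists (lpart B).
  by rewrite inE LB /=; apply/eqP; clear -cs jk; lia.
apply/setP => z; case: z => [e|x]; rewrite !inE ?sumE /S ?inl_S ?inr_S //=.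
by rewrite inE.
Qed.

Lemma Nb_matroid (E X : finType) (Q : {set {set E}}) j k :
  convex_sys Q -> delta_matroid Q -> #|X| = k - j -> j <= k -> level Q j != set0 ->
  is_matroid_bases (Nb X Q j k).
Proof.
move=> cv dm cX jk /set0Pn [b0 Hb0]; split.
  by apply/set0Pn; exists ([set inl e | e in b0] :|: [set inr x | x : X]); apply: B0_Nb.
move=> B1 B2 x H1 H2 Hx; exact: Nb_exch.
Qed.

Theorem corollary4p13 (E : finType) (Q : {set {set E}}) :
  Q != set0 -> convex_sys Q -> delta_matroid Q ->
  let r := \max_(S in Q) #|S| in
  let s := \big[minn/#|E|]_(S in Q) #|S| in
  (forall k, s <= k <= r -> is_matroid_bases (level Q k)) /\
  (forall j k, s <= j -> j < k -> k <= r ->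
     strong_map (level Q k) (level Q j)).
Proof.
move=> Qne cv dm r s.
have [Sr HSr cSr] : exists2 Sr, Sr \in Q & #|Sr| = r.
  have : 0 < #|Q| by rewrite card_gt0.
  by rewrite /r; case/(eq_bigmax_cond (fun S : {set E} => #|S|)) => S HS ->; exists S.
have [[S0 HS0 cS0] _] := @bigmin_fin _ Q (fun S : {set E} => #|S|) #|E| (fun S _ => max_card S) Qne.
have lvl : forall k, s <= k <= r -> level Q k != set0.
  move=> k /andP [sk kr]; apply/set0Pn.
  have sS0 : s = #|S0| := cS0.
  have le : #|S0| + (k - #|S0|) <= #|Sr| by rewrite cSr; clear -sk kr sS0; lia.
  have [b Hb /andP [_ /eqP cb]] := extend cv dm HSr HS0 le.
  exists b; rewrite inE Hb cb /=; apply/eqP; clear -sk sS0; lia.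
split.
  move=> k Hk; split; first exact: lvl.
  move=> B1 B2 x H1 H2 Hx; exact: level_exch.
move=> j k sj jk kr.
have jk' : j <= k by apply: ltnW.
exists ('I_(k - j)), (Nb 'I_(k - j) Q j k); split.
  apply: Nb_matroid => //; first by rewrite card_ord.
  by apply: lvl; rewrite sj /=; apply: leq_trans kr.
cbv zeta; split.
  by apply: (Nb_del _ cv dm jk' HSr); rewrite cSr.
apply: Nb_con => //; first by rewrite card_ord.
by apply: lvl; rewrite sj /=; apply: leq_trans kr.
Qed.
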